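(* Let $\ell\in\mathbb{N}$ and let $\rho$ be a self-avoiding walk of length $\ell$ in $\mathbb{Z}^2$ such that $y(\rho_0)=\min_{0\le i\le\ell}y(\rho_i)$ and $y(\rho_\ell)=\max_{0\le i\le\ell}y(\rho_i)$. Let $h\in\mathbb{N}$. If $(j_1,k_1)\ne(j_2,k_2)$ are two right-detachable $\rho$-adjacencies of gap $h$, then $|k_2-k_1|\ge h$.
   Context: For a self-avoiding walk $\rho$ of length $\ell$ in $\mathbb{Z}^2$, an index pair $(j,k)$ with $0\le j<k\le\ell$ is a right-detachable $\rho$-adjacency of gap $k-j$ if: (i) $\{\rho_j,\rho_k\}$ are the endpoints of a vertical unit edge; (ii) letting $P$ be the unit square (plaquette) whose right side is this edge, the two horizontal edges of $P$ are traversed by $\rho$ and the two vertical edges of $P$ are not; (iii) the edge set obtained from the edges of $\rho$ by removing the two horizontal edges of $P$ and adding its two vertical edges is the disjoint union of a self-avoiding walk $\rho'$ and a self-avoiding polygon $Q$; (iv) for every positive integer $t$, the translate $Q+(t,0)$ is disjoint from $\rho'$. *)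

(* Defs.v *)
From Stdlib Require Import ZArith Arith Lia.
Open Scope Z_scope.

Definition point := (Z * Z)%type.
Definition xc (p : point) : Z := fst p.
Definition yc (p : point) : Z := snd p.

Definition adj (p q : point) : Prop :=
  Z.abs (xc p - xc q) + Z.abs (yc p - yc q) = 1.

Definition same_edge (a b p q : point) : Prop :=
  (a = p /\ b = q) \/ (a = q /\ b = p).

(* A walk of length l is a map w : nat -> point, of which only w 0 .. w l
   matter.  It is self-avoiding if consecutive points are adjacent and the
   points w 0, ..., w l are pairwise distinct. *)
Definition SAW (w : nat -> point) (l : nat) : Prop :=
  (forall i, (i < l)%nat -> adj (w i) (w (S i))) /\
  (forall i j, (i <= l)%nat -> (j <= l)%nat -> w i = w j -> i = j).

Definition walk_edge (w : nat -> point) (l : nat) (p q : point) : Prop :=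
  exists i, (i < l)%nat /\ same_edge (w i) (w (S i)) p q.

Definition walk_vertex (w : nat -> point) (l : nat) (v : point) : Prop :=
  exists i, (i <= l)%nat /\ w i = v.

Definition SAP (q : nat -> point) (m : nat) : Prop :=
  (3 <= m)%nat /\
  (forall i, (i < m)%nat -> adj (q i) (q ((S i) mod m)%nat)) /\
  (forall i j, (i < m)%nat -> (j < m)%nat -> q i = q j -> i = j).

Definition poly_edge (q : nat -> point) (m : nat) (a b : point) : Prop :=
  exists i, (i < m)%nat /\ same_edge (q i) (q ((S i) mod m)%nat) a b.

Definition poly_vertex (q : nat -> point) (m : nat) (v : point) : Prop :=
  exists i, (i < m)%nat /\ q i = v.

(* Plaquette P whose right side is the vertical edge {(x,y),(x,y+1)}:
   corners (x-1,y),(x,y),(x-1,y+1),(x,y+1). *)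
Definition plaq_horizontal (x y : Z) (a b : point) : Prop :=
  same_edge (x - 1, y) (x, y) a b \/ same_edge (x - 1, y + 1) (x, y + 1) a b.

Definition plaq_vertical (x y : Z) (a b : point) : Prop :=
  same_edge (x, y) (x, y + 1) a b \/ same_edge (x - 1, y) (x - 1, y + 1) a b.

Definition swapped_edge (rho : nat -> point) (l : nat) (x y : Z)
  (a b : point) : Prop :=
  (walk_edge rho l a b /\ ~ plaq_horizontal x y a b) \/ plaq_vertical x y a b.

(* (j,k) is a right-detachable rho-adjacency (its gap is k - j). *)
Definition right_detachable (rho : nat -> point) (l j k : nat) : Prop :=
  (j < k)%nat /\ (k <= l)%nat /\
  exists x y : Z,
    same_edge (rho j) (rho k) (x, y) (x, y + 1) /\
    walk_edge rho l (x - 1, y) (x, y) /\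
    walk_edge rho l (x - 1, y + 1) (x, y + 1) /\
    ~ walk_edge rho l (x, y) (x, y + 1) /\
    ~ walk_edge rho l (x - 1, y) (x - 1, y + 1) /\
    exists (rho' : nat -> point) (l' : nat) (q : nat -> point) (m : nat),
      SAW rho' l' /\ SAP q m /\
      (forall a b, swapped_edge rho l x y a b <->
                   (walk_edge rho' l' a b \/ poly_edge q m a b)) /\
      (forall v, ~ (walk_vertex rho' l' v /\ poly_vertex q m v)) /\
      (forall v, walk_vertex rho l v <->
                 (walk_vertex rho' l' v \/ poly_vertex q m v)) /\
      (forall t : Z, 0 < t -> forall v,
          poly_vertex q m v -> ~ walk_vertex rho' l' (xc v + t, yc v)).

(* Main.v *)
Require Import Defs.
From Stdlib Require Import ZArith Arith Lia Classical.

Lemma se_sym a b p q : same_edge a b p q -> same_edge p q a b.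
Proof. unfold same_edge; intuition; subst; auto. Qed.
Lemma se_swap2 a b p q : same_edge a b p q -> same_edge a b q p.
Proof. unfold same_edge; intuition. Qed.

Lemma saw_inj w l i j : SAW w l -> (i <= l)%nat -> (j <= l)%nat -> w i = w j -> i = j.
Proof. intros [_ H]; apply H. Qed.

Lemma edge_unique rho l i p a b : SAW rho l -> (i < l)%nat -> (p < l)%nat ->
  same_edge (rho i) (rho (S i)) a b -> same_edge (rho p) (rho (S p)) a b -> i = p.
Proof.
  intros Hs Hi Hp H1 H2. unfold same_edge in *.
  destruct H1 as [[A1 B1]|[A1 B1]]; destruct H2 as [[A2 B2]|[A2 B2]].
  - apply (saw_inj _ _ _ _ Hs); (lia || congruence).
  - assert (i = S p) by (apply (saw_inj _ _ _ _ Hs); (lia || congruence)).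
    assert (S i = p) by (apply (saw_inj _ _ _ _ Hs); (lia || congruence)). lia.
  - assert (i = S p) by (apply (saw_inj _ _ _ _ Hs); (lia || congruence)).
    assert (S i = p) by (apply (saw_inj _ _ _ _ Hs); (lia || congruence)). lia.
  - assert (S i = S p) by (apply (saw_inj _ _ _ _ Hs); (lia || congruence)). lia.
Qed.

Lemma walk_edge_vertex w l a b : walk_edge w l a b -> walk_vertex w l a /\ walk_vertex w l b.
Proof.
  intros [i [Hi [[<- <-]|[<- <-]]]]; split;
  solve [exists i; split; [lia|auto] | exists (S i); split; [lia|auto]].
Qed.

Lemma poly_edge_vertex q m a b : (0 < m)%nat -> poly_edge q m a b ->
  poly_vertex q m a /\ poly_vertex q m b.
Proof.
  intros Hm [i [Hi Hs]].
  assert (Hmod : (S i mod m < m)%nat) by (apply Nat.mod_upper_bound; lia).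
  destruct Hs as [[<- <-]|[<- <-]]; split;
  solve [exists i; split; [lia|auto] | exists (S i mod m)%nat; split; [lia|auto]].
Qed.

Lemma swapped_sym rho l x y a b : swapped_edge rho l x y a b -> swapped_edge rho l x y b a.
Proof.
  unfold swapped_edge, walk_edge, plaq_horizontal, plaq_vertical.
  intros [[[i [Hi Hs]] Hn]|Hv].
  - left. split. exists i. split; auto. apply se_swap2; auto.
    intros H; apply Hn. destruct H as [H|H]; [left|right]; apply se_swap2; auto.
  - right. destruct Hv as [H|H]; [left|right]; apply se_swap2; auto.
Qed.

Lemma const_blk (m : nat -> Prop) (u v : nat) :
  (u <= v)%nat -> (forall i, (u <= i < v)%nat -> (m i <-> m (S i))) -> (m u <-> m v).
Proof.
  intros Huv H. induction v as [|v IH].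
  - assert (u = 0%nat) by lia. subst. tauto.
  - destruct (Nat.eq_dec u (S v)) as [->|Hne]; [tauto|].
    assert (Hs := H v ltac:(lia)).
    assert (Hm := IH ltac:(lia) (fun i Hi => H i ltac:(lia))). tauto.
Qed.

Lemma ivt rho l u v z : SAW rho l -> (u <= v)%nat -> (v <= l)%nat ->
  (yc (rho u) <= z <= yc (rho v) \/ yc (rho v) <= z <= yc (rho u)) ->
  exists i, (u <= i <= v)%nat /\ yc (rho i) = z.
Proof.
  intros Hs Huv Hvl Hz. induction v as [|v IH].
  - assert (u = 0%nat) by lia. subst. exists 0%nat. split; [lia|]. lia.
  - destruct (Nat.eq_dec u (S v)) as [->|Hne].
    + exists (S v). split; [lia|]. lia.
    + destruct Hs as [Ha _]. assert (Hadj := Ha v ltac:(lia)). unfold adj in Hadj.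
      destruct (classic (yc (rho u) <= z <= yc (rho v) \/ yc (rho v) <= z <= yc (rho u))) as [Hc|Hc].
      * destruct (IH ltac:(lia) ltac:(lia) Hc) as [i [Hi1 Hi2]]. exists i. split; [lia|auto].
      * exists (S v). split; [lia|]. lia.
Qed.

Lemma core (rho : nat -> point) (l : nat) (PV WV : point -> Prop)
  (Sg : point -> point -> Prop) (p1 p2 : nat) (La Ra Lb Rb : point) :
  SAW rho l -> (p1 < p2)%nat -> (p2 < l)%nat ->
  (forall a b, Sg a b -> (PV a <-> PV b)) ->
  (forall a b, Sg a b -> Sg b a) ->
  (forall v, walk_vertex rho l v <-> WV v \/ PV v) ->
  (forall v, ~ (WV v /\ PV v)) ->
  (forall i, (i < l)%nat -> i <> p1 -> i <> p2 -> Sg (rho i) (rho (S i))) ->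
  Sg La Lb -> Sg Ra Rb ->
  (forall v w, PV v -> WV w -> yc w = yc v -> xc w <= xc v) ->
  (forall i, (i < l)%nat -> ~ same_edge (rho i) (rho (S i)) La Lb) ->
  (exists w0, WV w0 /\ forall u v, Sg w0 u -> Sg w0 v -> u = v) ->
  (exists v, PV v) -> (exists w, WV w) ->
  La = (xc Ra - 1, yc Ra) -> La <> Lb ->
  same_edge (rho p1) (rho (S p1)) La Ra ->
  same_edge (rho p2) (rho (S p2)) Lb Rb ->
  rho p1 = La /\ rho (S p1) = Ra /\ rho p2 = Rb /\ rho (S p2) = Lb /\
  (forall i, (i <= l)%nat -> (PV (rho i) <-> (S p1 <= i <= p2)%nat)).
Proof.
  intros Hsaw Hp12 Hp2l Hsg Hsym Hvert Hdisj Hstep HLL HRR Htr HnL Hdeg HPV HWV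
    HLa HLab He1 He2.
  assert (Hst: forall i, (i<l)%nat -> i<>p1 -> i<>p2 -> (PV (rho i) <-> PV (rho (S i))))
    by (intros; apply Hsg; apply Hstep; auto).
  assert (B0: forall i, (i <= p1)%nat -> (PV (rho i) <-> PV (rho p1))).
  { intros i Hi. apply (const_blk (fun i => PV (rho i))); [lia|].
    intros k Hk; apply Hst; lia. }
  assert (B1: forall i, (S p1 <= i <= p2)%nat -> (PV (rho i) <-> PV (rho (S p1)))).
  { intros i Hi. pose proof (const_blk (fun i => PV (rho i)) (S p1) i ltac:(lia)
      (fun k Hk => Hst k ltac:(lia) ltac:(lia) ltac:(lia))). simpl in H. tauto. }
  assert (B2: forall i, (S p2 <= i <= l)%nat -> (PV (rho i) <-> PV (rho (S p2)))).
  { intros i Hi. pose proof (const_blk (fun i => PV (rho i)) (S p2) i ltac:(lia)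
      (fun k Hk => Hst k ltac:(lia) ltac:(lia) ltac:(lia))). simpl in H. tauto. }
  assert (Hblk: forall i, (i <= l)%nat ->
     ((i <= p1)%nat /\ (PV (rho i) <-> PV (rho p1))) \/
     ((S p1 <= i <= p2)%nat /\ (PV (rho i) <-> PV (rho (S p1)))) \/
     ((S p2 <= i)%nat /\ (PV (rho i) <-> PV (rho (S p2))))).
  { intros i Hi. destruct (le_lt_dec i p1); [left; split; auto|].
    destruct (le_lt_dec i p2); [right; left; split; [lia| apply B1; lia]|].
    right; right; split; [lia| apply B2; lia]. }
  assert (Hnot: (PV (rho p1) <-> PV (rho (S p1))) -> (PV (rho (S p1)) <-> PV (rho (S p2))) -> False).
  { intros E1 E2. destruct HPV as [v Hv].
    assert (Hv' : walk_vertex rho l v) by (apply Hvert; right; auto).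
    destruct Hv' as [i [Hi Hiv]]. subst v.
    destruct HWV as [w Hw].
    assert (Hw' : walk_vertex rho l w) by (apply Hvert; left; auto).
    destruct Hw' as [i' [Hi' Hiw]]. subst w.
    assert (Hnw : ~ PV (rho i')) by (intro; apply (Hdisj (rho i')); auto).
    destruct (Hblk i Hi) as [[_ X]|[[_ X]|[_ X]]];
    destruct (Hblk i' Hi') as [[_ Y]|[[_ Y]|[_ Y]]]; tauto. }
  pose proof (Hsg _ _ HLL) as RL. pose proof (Hsg _ _ HRR) as RR.
  assert (HyLa : yc La = yc Ra) by (rewrite HLa; reflexivity).
  assert (HxLa : xc La = xc Ra - 1) by (rewrite HLa; reflexivity).
  assert (HRv : walk_vertex rho l Ra).
  { destruct He1 as [[_ E]|[E _]]; [exists (S p1)|exists p1]; split; auto; lia. }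
  assert (Htr1 : PV La -> ~ PV Ra -> False).
  { intros H1 H2. assert (WV Ra) by (apply Hvert in HRv; tauto).
    pose proof (Htr _ _ H1 H ltac:(lia)). lia. }
  destruct He1 as [[E1 E2]|[E1 E2]]; destruct He2 as [[E3 E4]|[E3 E4]].
  - exfalso. pose proof (B1 p2 ltac:(lia)). rewrite <- E1, <- E3 in RL.
    rewrite <- E2, <- E4 in RR. apply Hnot; tauto.
  - rewrite <- E1, <- E4 in RL. rewrite <- E2, <- E3 in RR.
    rewrite <- E1, <- E2 in Htr1.
    split; [auto|split; [auto|split; [auto|split; [auto|]]]].
    destruct (classic (PV (rho (S p1)))) as [H1|H1].
    + assert (Hz : ~ PV (rho p1)) by (intro; apply Hnot; tauto).
      intros ii Hii. destruct (Hblk ii Hii) as [[Hb X]|[[Hb X]|[Hb X]]].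
      * split; intro; [tauto|lia].
      * split; intro; [lia|tauto].
      * split; intro; [tauto|lia].
    + exfalso. destruct (classic (PV (rho p1))) as [Hq|Hq]; [tauto|].
      apply Hnot; tauto.
  - exfalso. rewrite <- E2, <- E3 in RL. rewrite <- E1, <- E4 in RR.
    rewrite <- E2, <- E1 in Htr1. pose proof (B1 p2 ltac:(lia)).
    destruct (classic (PV (rho (S p1)))) as [H1|H1].
    + destruct (classic (PV (rho p1))) as [Hq|Hq]; [|tauto].
      apply Hnot; tauto.
    + destruct (classic (PV (rho p1))) as [Hq|Hq]; [|apply Hnot; tauto].
      destruct Hdeg as [w0 [Hw0 Hw0u]].
      assert (Hw' : walk_vertex rho l w0) by (apply Hvert; left; auto).
      destruct Hw' as [i [Hi Hiw]]. subst w0.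
      assert (Hnw : ~ PV (rho i)) by (intro; apply (Hdisj (rho i)); auto).
      assert (Hir : (S p1 <= i <= p2)%nat).
      { destruct (Hblk i Hi) as [[Hb X]|[[Hb X]|[Hb X]]]; [tauto|lia|tauto]. }
      assert (Hne : S p1 <> p2) by (intro Heq; apply HLab; rewrite <- E2, <- E3, Heq; auto).
      destruct (Nat.eq_dec i (S p1)) as [->|Hi1].
      * assert (HS : Sg (rho (S p1)) (rho (S (S p1)))) by (apply Hstep; lia).
        rewrite E2 in HS, Hw0u. assert (U := Hw0u _ _ HLL HS).
        apply (HnL (S p1) ltac:(lia)). left. split; auto.
      * destruct (Nat.eq_dec i p2) as [->|Hi2].
        -- assert (HS : Sg (rho (p2 - 1)%nat) (rho (S (p2 - 1)))) by (apply Hstep; lia).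
           replace (S (p2 - 1)) with p2 in HS by lia. apply Hsym in HS.
           rewrite E3 in HS, Hw0u. assert (U := Hw0u _ _ (Hsym _ _ HLL) HS).
           apply (HnL (p2 - 1)%nat ltac:(lia)). left.
           replace (S (p2 - 1)) with p2 by lia. split; auto.
        -- assert (HS : Sg (rho (i - 1)%nat) (rho (S (i - 1)))) by (apply Hstep; lia).
           replace (S (i - 1)) with i in HS by lia. apply Hsym in HS.
           assert (HS2 : Sg (rho i) (rho (S i))) by (apply Hstep; lia).
           assert (U := Hw0u _ _ HS HS2).
           assert ((i - 1)%nat = S i) by (apply (saw_inj _ _ _ _ Hsaw); lia || auto).
           lia.
  - exfalso. rewrite <- E2, <- E4 in RL. rewrite <- E1, <- E3 in RR.
    pose proof (B1 p2 ltac:(lia)). apply Hnot; tauto.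
Qed.

Definition goodP (rho : nat -> point) (l j k : nat) : Prop :=
  (1 <= j)%nat /\ (k < l)%nat /\ (j < k)%nat /\
  rho (j - 1)%nat = (xc (rho j) - 1, yc (rho j)) /\
  rho (S k) = (xc (rho k) - 1, yc (rho k)) /\ xc (rho j) = xc (rho k) /\
  (yc (rho j) - yc (rho k) = 1 \/ yc (rho k) - yc (rho j) = 1) /\
  (forall a b, (a <= l)%nat -> (b <= l)%nat -> (j <= a <= k)%nat -> ~ (j <= b <= k)%nat ->
     yc (rho a) = yc (rho b) -> xc (rho b) < xc (rho a)).

Lemma post rho l j k p1 p2 La Ra Lb Rb (PV WV : point -> Prop) :
  SAW rho l -> (j < k)%nat -> (k <= l)%nat -> (p1 < p2)%nat -> (p2 < l)%nat ->
  same_edge (rho j) (rho k) Ra Rb ->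
  rho p1 = La -> rho (S p1) = Ra -> rho p2 = Rb -> rho (S p2) = Lb ->
  La = (xc Ra - 1, yc Ra) -> Lb = (xc Rb - 1, yc Rb) -> xc Ra = xc Rb ->
  (yc Ra - yc Rb = 1 \/ yc Rb - yc Ra = 1) ->
  (forall i, (i <= l)%nat -> (PV (rho i) <-> (S p1 <= i <= p2)%nat)) ->
  (forall v, walk_vertex rho l v <-> WV v \/ PV v) ->
  (forall v w, PV v -> WV w -> yc w = yc v -> xc w <= xc v) ->
  goodP rho l j k.
Proof.
  intros Hs Hjk Hkl Hp Hpl Hse E1 E2 E3 E4 HLa HLb Hx Hy Hmem Hvert Htr.
  assert (j = S p1 /\ k = p2) as [-> ->].
  { destruct Hse as [[A B]|[A B]].
    - split; apply (saw_inj _ _ _ _ Hs); try lia; congruence.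
    - assert (j = p2) by (apply (saw_inj _ _ _ _ Hs); try lia; congruence).
      assert (k = S p1) by (apply (saw_inj _ _ _ _ Hs); try lia; congruence). lia. }
  unfold goodP. replace (S p1 - 1)%nat with p1 by lia.
  rewrite E1, E2, E3, E4.
  split; [lia|]. split; [lia|]. split; [lia|]. split; [auto|]. split; [auto|].
  split; [auto|]. split; [auto|].
  intros a b Ha Hb Ha' Hb' Hy'.
  assert (PV (rho a)) by (apply Hmem; auto).
  assert (~ PV (rho b)) by (rewrite Hmem; auto).
  assert (WV (rho b)).
  { assert (walk_vertex rho l (rho b)) by (exists b; auto). apply Hvert in H1. tauto. }
  pose proof (Htr _ _ H H1 (eq_sym Hy')).
  destruct (Z.eq_dec (xc (rho b)) (xc (rho a))) as [Heq|]; [|lia].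
  exfalso. assert (rho a = rho b).
  { destruct (rho a) as [xa ya] eqn:Ea, (rho b) as [xb yb] eqn:Eb.
    unfold xc, yc in *; simpl in *; subst; auto. }
  assert (a = b) by (apply (saw_inj _ _ _ _ Hs); auto). subst. tauto.
Qed.

Lemma good l rho j k : SAW rho l -> right_detachable rho l j k -> goodP rho l j k.
Proof.
  intros Hs Hrd.
  destruct Hrd as (Hjk & Hkl & x & y & Hse & [p [Hp Hpe]] & [q [Hq Hqe]] & HnR & HnL &
    rho' & l' & q0 & m & Hsaw' & Hsap & Hedge & Hdisj & Hvert & Htr).
  assert (Hm0 : (0 < m)%nat) by (destruct Hsap; lia).
  assert (Hsg : forall a b, swapped_edge rho l x y a b ->
    (poly_vertex q0 m a <-> poly_vertex q0 m b)).
  { intros a b H. apply Hedge in H. destruct H as [H|H].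
    - destruct (walk_edge_vertex _ _ _ _ H) as [Ha Hb].
      split; intro Hc; exfalso; [apply (Hdisj a)|apply (Hdisj b)]; auto.
    - destruct (poly_edge_vertex _ _ _ _ Hm0 H). tauto. }
  assert (Hsym : forall a b, swapped_edge rho l x y a b -> swapped_edge rho l x y b a)
    by apply swapped_sym.
  assert (Hstep : forall i, (i < l)%nat -> i <> p -> i <> q ->
     swapped_edge rho l x y (rho i) (rho (S i))).
  { intros i Hi Hip Hiq. left. split. exists i. split; auto. left; auto.
    intros [H|H]; apply se_sym in H.
    - apply Hip. apply (edge_unique _ _ _ _ _ _ Hs Hi Hp H Hpe).
    - apply Hiq. apply (edge_unique _ _ _ _ _ _ Hs Hi Hq H Hqe). }
  assert (Htr' : forall v w, poly_vertex q0 m v -> walk_vertex rho' l' w -> yc w = yc v ->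
     xc w <= xc v).
  { intros v w Hv Hw Hy. destruct (Z_le_gt_dec (xc w) (xc v)) as [|Hg]; auto.
    exfalso. apply (Htr (xc w - xc v) ltac:(lia) v Hv).
    replace (xc v + (xc w - xc v), yc v) with w; auto.
    destruct w as [a b]. unfold xc, yc in *; simpl in *. f_equal; lia. }
  assert (Hdeg : exists w0, walk_vertex rho' l' w0 /\ forall u v,
     swapped_edge rho l x y w0 u -> swapped_edge rho l x y w0 v -> u = v).
  { exists (rho' 0%nat). split. exists 0%nat; split; auto; lia.
    assert (K : forall u, swapped_edge rho l x y (rho' 0%nat) u -> u = rho' 1%nat).
    { intros u H. apply Hedge in H. destruct H as [H|H].
      - destruct H as [i [Hi [[A B]|[A B]]]].
        + assert (i = 0%nat) by (apply (saw_inj _ _ _ _ Hsaw'); auto; lia).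
          subst. auto.
        + assert (S i = 0%nat) by (apply (saw_inj _ _ _ _ Hsaw'); auto; lia). lia.
      - exfalso. destruct (poly_edge_vertex _ _ _ _ Hm0 H) as [H1 _].
        apply (Hdisj (rho' 0%nat)). split; auto. exists 0%nat; split; auto; lia. }
    intros u v Hu Hv. rewrite (K u Hu), (K v Hv). auto. }
  assert (HPV : exists v, poly_vertex q0 m v) by (exists (q0 0%nat); exists 0%nat; auto).
  assert (HWV : exists w, walk_vertex rho' l' w) by (exists (rho' 0%nat); exists 0%nat; split; auto; lia).
  assert (Hdisj' : forall v, ~ (walk_vertex rho' l' v /\ poly_vertex q0 m v)) by auto.
  assert (Hpq : p <> q).
  { intro; subst. destruct Hpe as [[A B]|[A B]]; destruct Hqe as [[C D]|[C D]];
    rewrite A in C || rewrite B in D; try (rewrite A in C); try (rewrite B in D);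
    first [injection C | injection D]; lia. }
  assert (VL : swapped_edge rho l x y (x - 1, y) (x - 1, y + 1)) by (right; right; left; auto).
  assert (VR : swapped_edge rho l x y (x, y) (x, y + 1)) by (right; left; left; auto).
  destruct (lt_eq_lt_dec p q) as [[Hlt|Heq]|Hlt]; [|contradiction|].
  - destruct (core rho l (poly_vertex q0 m) (walk_vertex rho' l') (swapped_edge rho l x y)
      p q (x - 1, y) (x, y) (x - 1, y + 1) (x, y + 1) Hs Hlt Hq Hsg Hsym Hvert Hdisj'
      Hstep VL VR Htr' (fun i Hi H => HnL (ex_intro _ i (conj Hi H))) Hdeg HPV HWV
      eq_refl ltac:(intro Hc; injection Hc; lia) Hpe Hqe) as (E1 & E2 & E3 & E4 & Hmem).
    apply (post rho l j k p q (x - 1, y) (x, y) (x - 1, y + 1) (x, y + 1)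
      (poly_vertex q0 m) (walk_vertex rho' l')); auto.
    simpl; lia.
  - destruct (core rho l (poly_vertex q0 m) (walk_vertex rho' l') (swapped_edge rho l x y)
      q p (x - 1, y + 1) (x, y + 1) (x - 1, y) (x, y) Hs Hlt Hp Hsg Hsym Hvert Hdisj'
      (fun i Hi H1 H2 => Hstep i Hi H2 H1) (Hsym _ _ VL) (Hsym _ _ VR) Htr'
      (fun i Hi H => HnL (ex_intro _ i (conj Hi (se_swap2 _ _ _ _ H)))) Hdeg HPV HWV
      eq_refl ltac:(intro Hc; injection Hc; lia) Hqe Hpe) as (E1 & E2 & E3 & E4 & Hmem).
    apply (post rho l j k q p (x - 1, y + 1) (x, y + 1) (x - 1, y) (x, y)
      (poly_vertex q0 m) (walk_vertex rho' l')); auto.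
    apply se_swap2; auto.
    simpl; lia.
Qed.

Lemma main_ord l rho j1 k1 j2 k2 : SAW rho l -> goodP rho l j1 k1 -> goodP rho l j2 k2 ->
  (k1 - j1 = k2 - j2)%nat -> (k1 < k2)%nat -> (k1 - j1 <= k2 - k1)%nat.
Proof.
  intros Hs G1 G2 Hh Hk.
  destruct G1 as (A1 & B1 & C1 & D1 & E1 & F1 & H1 & N1).
  destruct G2 as (A2 & B2 & C2 & D2 & E2 & F2 & H2 & N2).
  destruct (le_lt_dec (k1 - j1) (k2 - k1)) as [|Hlt]; auto. exfalso.
  assert (Hdis : forall a b, (j1 <= a <= j2 - 1)%nat -> (S k1 <= b <= k2)%nat ->
     yc (rho a) <> yc (rho b)).
  { intros a b Ha Hb Hy.
    pose proof (N1 a b ltac:(lia) ltac:(lia) ltac:(lia) ltac:(lia) Hy).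
    pose proof (N2 b a ltac:(lia) ltac:(lia) ltac:(lia) ltac:(lia) (eq_sym Hy)). lia. }
  set (r1 := yc (rho j1)). set (r2 := yc (rho j2)).
  set (s1 := yc (rho k1)). set (s2 := yc (rho k2)).
  assert (Er2 : yc (rho (j2 - 1)%nat) = r2) by (rewrite D2; reflexivity).
  assert (Es1 : yc (rho (S k1)) = s1) by (rewrite E1; reflexivity).
  assert (Hz : forall z, (r1 <= z <= r2 \/ r2 <= z <= r1) ->
     (s1 <= z <= s2 \/ s2 <= z <= s1) -> False).
  { intros z Hza Hzb.
    destruct (ivt rho l j1 (j2 - 1) z Hs ltac:(lia) ltac:(lia) ltac:(rewrite Er2; exact Hza))
      as [a [Ha Hya]].
    destruct (ivt rho l (S k1) k2 z Hs ltac:(lia) ltac:(lia) ltac:(rewrite Es1; exact Hzb))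
      as [b [Hb Hyb]].
    apply (Hdis a b); auto; congruence. }
  pose proof (Hz s1). pose proof (Hz s2). pose proof (Hz r1). pose proof (Hz r2).
  assert (r1 = r2 /\ s1 = s2) as [R S'].
  { unfold r1, r2, s1, s2 in *.
    destruct (Z.lt_total (yc (rho j1)) (yc (rho j2))) as [Hc|[Hc|Hc]]; split;
    try solve [exfalso; lia | lia]. }
  assert (X1 := N2 j2 j1 ltac:(lia) ltac:(lia) ltac:(lia) ltac:(lia) ltac:(unfold r1, r2 in R; lia)).
  assert (X2 := N1 k1 k2 ltac:(lia) ltac:(lia) ltac:(lia) ltac:(lia) ltac:(unfold s1, s2 in S'; lia)).
  lia.
Qed.

Theorem mainTheorem11 (l : nat) (rho : nat -> point) :
  SAW rho l ->
  (forall i, (i <= l)%nat -> yc (rho 0%nat) <= yc (rho i)) ->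
  (forall i, (i <= l)%nat -> yc (rho i) <= yc (rho l)) ->
  forall (h j1 k1 j2 k2 : nat),
    right_detachable rho l j1 k1 -> (k1 - j1)%nat = h ->
    right_detachable rho l j2 k2 -> (k2 - j2)%nat = h ->
    (j1, k1) <> (j2, k2) ->
    Z.of_nat h <= Z.abs (Z.of_nat k2 - Z.of_nat k1).
Proof.
  intros Hs _ _ h j1 k1 j2 k2 R1 H1 R2 H2 Hne.
  pose proof (good _ _ _ _ Hs R1) as G1. pose proof (good _ _ _ _ Hs R2) as G2.
  assert (C1 : (j1 < k1)%nat) by (destruct G1 as (_&_&X&_); auto).
  assert (C2 : (j2 < k2)%nat) by (destruct G2 as (_&_&X&_); auto).
  destruct (lt_eq_lt_dec k1 k2) as [[Hlt|Heq]|Hlt].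
  - pose proof (main_ord _ _ _ _ _ _ Hs G1 G2 ltac:(lia) Hlt). lia.
  - exfalso. apply Hne. f_equal; lia.
  - pose proof (main_ord _ _ _ _ _ _ Hs G2 G1 ltac:(lia) Hlt). lia.
Qed.
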